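(* Consider a $2^k$ full factorial design under the generalized linear model described in the context, i.e., $m=p=2^k$ and the model matrix is \[ \mathbf{X}=\begin{bmatrix}1&-1\\1&1\end{bmatrix}\otimes\cdots\otimes\begin{bmatrix}1&-1\\1&1\end{bmatrix}\quad(k\text{ factors, Kronecker product}), \] and suppose $\nu_i>0$ for all $i$. Then an allocation $\mathbf{w}_*=(w_1^*,\ldots,w_m^* )^T\in S_m$ is A-optimal if and only if $w_i^*\propto\nu_i^{-1/2}$, $i=1,\ldots,m$. Furthermore, the uniform allocation $w_i^*=2^{-k}$ for all $i$ is A-optimal if and only if $\nu_1=\cdots=\nu_m$.
   Context: Generalized linear model (GLM): independent responses $Y_i$ from a one-parameter exponential family with $E(Y_i)=\mu_i$ and $\eta_i=g(\mu_i)=\mathbf{X}_i^T\boldsymbol\beta$, where $g$ is the link function, $\mathbf{X}_i=\mathbf{q}(\mathbf{x}_i)=(q_1(\mathbf{x}_i),\ldots,q_p(\mathbf{x}_i))^T$, and $\boldsymbol\beta\in\mathbb{R}^p$ is a fixed (assumed) parameter vector. Let $\nu_i=(\partial\mu_i/\partial\eta_i)^2/\mathrm{Var}(Y_i)\ge0$. The model matrix is $\mathbf{X}=(\mathbf{q}(\mathbf{x}_1),\ldots,\mathbf{q}(\mathbf{x}_m))^T$. Let $S_m=\{\mathbf{w}\in\mathbb{R}^m: w_i\ge 0,\sum_i w_i=1\}$, $\mathbf{W}=\mathrm{diag}\{w_1\nu_1,\ldots,w_m\nu_m\}$, $f(\mathbf{w})=|\mathbf{X}^T\mathbf{W}\mathbf{X}|$,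 and $h(\mathbf{w})=[\mathrm{tr}((\mathbf{X}^T\mathbf{W}\mathbf{X})^{-1})]^{-1}$ if $f(\mathbf{w})>0$, $h(\mathbf{w})=0$ otherwise. An allocation is A-optimal if it maximizes $h$ over $S_m$. *)

(* Defs.v *)
(* R : rcfType (real closed field, needed for Num.sqrt). *)
From HB Require Import structures.
From mathcomp Require Import all_boot all_order all_algebra.
From mathcomp Require Export mxtens.
Set Implicit Arguments. Unset Strict Implicit. Unset Printing Implicit Defensive.
Import Order.TTheory GRing.Theory Num.Theory.
Local Open Scope ring_scope.

Definition H2 {R : rcfType} : 'M[R]_2 :=
  \matrix_(i < 2, j < 2) (if (i == 0%N :> nat) && (j == 1%N :> nat) then -1 else 1).

Definition design_X {R : rcfType} (k : nat) : 'M[R]_(2 ^ k, 2 ^ k) := H2 ^t k.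

Definition in_simplex {R : rcfType} {m : nat} (w : 'I_m -> R) : Prop :=
  (forall i, 0 <= w i) /\ \sum_(i < m) w i = 1.

Definition info_mx {R : rcfType} {m p : nat} (X : 'M[R]_(m, p))
  (nu w : 'I_m -> R) : 'M[R]_p :=
  X^T *m diag_mx (\row_i (w i * nu i)) *m X.

Definition f_det {R : rcfType} {m p : nat} (X : 'M[R]_(m, p)) (nu w : 'I_m -> R) : R :=
  \det (info_mx X nu w).

Definition h_A {R : rcfType} {m p : nat} (X : 'M[R]_(m, p)) (nu w : 'I_m -> R) : R :=
  if 0 < f_det X nu w then (\tr (invmx (info_mx X nu w)))^-1 else 0.

Definition A_optimal {R : rcfType} {m p : nat} (X : 'M[R]_(m, p)) (nu w : 'I_m -> R) : Prop :=
  in_simplex w /\ forall v : 'I_m -> R, in_simplex v -> h_A X nu v <= h_A X nu w.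

(* Main.v *)
Require Import Defs.
From HB Require Import structures.
From mathcomp Require Import all_boot all_order all_algebra ring lra.
Import Order.TTheory GRing.Theory Num.Theory.
Local Open Scope ring_scope.

Lemma tens_scalar (R : comPzRingType) m n (a b : R) :
  ((a%:M : 'M_m) *t (b%:M : 'M_n)) = (a * b)%:M.
Proof.
apply/matrixP=> i j; case: (mxtens_indexP i)=> i0 i1; case: (mxtens_indexP j)=> j0 j1.
rewrite tensmxE !mxE (inj_eq (can_inj (@mxtens_indexK m n))) xpair_eqE.
by case: (i0 == j0); case: (i1 == j1); rewrite /= ?mulr1n ?mulr0n ?mulr0 ?mul0r.
Qed.

Lemma H2_orth (R : rcfType) :
  (H2 : 'M[R]_2)^T *m H2 = 2%:R%:M /\ (H2 : 'M[R]_2) *m H2^T = 2%:R%:M.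
Proof.
split; apply/matrixP=> i j; rewrite !mxE big_ord_recr big_ord1 /= !mxE;
case: i => [[|[|i]] hi] //; case: j => [[|[|j]] hj] //=.
all: rewrite ?mulr1n ?mulr0n; rewrite ?mulN1r ?mulNr ?mulr1 ?opprK //; try ring.
Qed.

Lemma X_orth (R : rcfType) (k : nat) :
  (design_X k : 'M[R]_(2^k))^T *m design_X k = (2^k)%:R%:M /\
  (design_X k : 'M[R]_(2^k)) *m (design_X k)^T = (2^k)%:R%:M.
Proof.
rewrite /design_X; case: k => [|k].
  by rewrite ntensmx0 trmx1 mulmx1.
elim: k => [|k [IH1 IH2]]; first by rewrite ntensmx1; exact: H2_orth.
have [h1 h2] := H2_orth R.
rewrite ntensmxSS trmx_tens !tensmx_mul h1 h2 IH1 IH2 !tens_scalar -natrM.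
by split.
Qed.

Lemma hA_formula (R : rcfType) n (X : 'M[R]_n) (c : R) (hc : 0 < c)
  (h1 : X^T *m X = c%:M) (h2 : X *m X^T = c%:M) (nu w : 'I_n -> R)
  (hnu : forall i, 0 < nu i) (hw : forall i, 0 <= w i) :
  h_A X nu w = if [forall i, 0 < w i] then c / \sum_i (w i * nu i)^-1 else 0.
Proof.
have detX : \det X ^+ 2 = c ^+ n.
  by rewrite -(det_scalar n c) -h1 det_mulmx det_tr expr2.
have fdet : f_det X nu w = \det X ^+ 2 * \prod_i (w i * nu i).
  rewrite /f_det /info_mx !det_mulmx det_tr det_diag.
  under eq_bigr do rewrite mxE.
  ring.
rewrite /h_A fdet detX.
case: (boolP [forall i, 0 < w i]) => [/forallP wpos | /forallPn [i0 hi0]].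
  have wnu i : 0 < w i * nu i by rewrite mulr_gt0.
  rewrite ifT; last by rewrite mulr_gt0 ?exprn_gt0 // prodr_gt0.
  pose D := diag_mx (\row_i (w i * nu i)); pose D' := diag_mx (\row_i (w i * nu i)^-1).
  have DD' : D *m D' = 1%:M.
    rewrite mulmx_diag -diag_const_mx; congr diag_mx; apply/rowP => j.
    by rewrite !mxE mulfV // gt_eqF.
  have e : info_mx X nu w *m (c^-2 *: (X^T *m D' *m X)) = 1%:M.
    rewrite /info_mx -/D -scalemxAr !mulmxA -(mulmxA (X^T *m D) X) h2.
    rewrite mul_mx_scalar -!scalemxAl -(mulmxA X^T D D') DD' mulmx1 h1.
    rewrite scalerA scale_scalar_mx; congr (_%:M).
    by field; rewrite gt_eqF.
  have inv : invmx (info_mx X nu w) = c^-2 *: (X^T *m D' *m X).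
    have [u _] := mulmx1_unit e.
    by rewrite -[invmx _]mulmx1 -e mulmxA mulVmx // mul1mx.
  rewrite inv mxtraceZ -mulmxA mxtrace_mulC -mulmxA h2 mul_mx_scalar mxtraceZ mxtrace_diag.
  under eq_bigr do rewrite mxE.
  rewrite !invfM invrK mulrA -(mulrA c c) mulfV ?mulr1 //.
  by rewrite gt_eqF.
have wi0 : w i0 = 0 by apply/eqP; rewrite eq_le hw andbT leNgt.
by rewrite (bigD1 i0) //= wi0 !mul0r mulr0 ltxx.
Qed.

Lemma divc_le (R : rcfType) (c x y : R) : 0 < c -> 0 < x -> 0 < y ->
  (c / x <= c / y) = (y <= x).
Proof. by move=> hc hx hy; rewrite ler_pM2l // lef_pV2 ?posrE. Qed.

Lemma key_id (R : rcfType) n (a nu w : 'I_n -> R)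
  (ha2 : forall i, a i ^+ 2 = (nu i)^-1) (hnu : forall i, 0 < nu i)
  (hw : forall i, 0 < w i) (hs : \sum_i w i = 1) :
  \sum_i (w i * nu i)^-1 - (\sum_i a i) ^+ 2 =
  \sum_i (a i - (\sum_j a j) * w i) ^+ 2 / w i.
Proof.
set S := \sum_j a j.
rewrite [in RHS](eq_bigr (fun i => (w i * nu i)^-1 - 2 * S * a i + S ^+ 2 * w i)); last first.
  move=> i _; rewrite invfM -ha2.
  have := hw i; have := hnu i => h1 h2.
  by field; rewrite gt_eqF.
rewrite big_split sumrB /= -!mulr_sumr hs -/S.
ring.
Qed.

Arguments hA_formula {R n X c} hc h1 h2 {nu w} hnu hw.
Arguments key_id {R n a nu w} ha2 hnu hw hs.

Theorem corollary1 (R : rcfType) (k : nat) (nu : 'I_(2 ^ k) -> R)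
  (hnu : forall i, 0 < nu i) :
  (forall w : 'I_(2 ^ k) -> R, in_simplex w ->
     (A_optimal (design_X k) nu w <->
      exists c : R, forall i, w i = c * (Num.sqrt (nu i))^-1))
  /\
  (A_optimal (design_X k) nu (fun _ => ((2 ^ k)%:R)^-1) <->
   (forall i j, nu i = nu j)).
Proof.
pose c : R := (2^k)%:R.
have hc : 0 < c by rewrite ltr0n expn_gt0.
have [h1 h2] := X_orth R k.
pose a i := (Num.sqrt (nu i))^-1.
have hsq i : 0 < Num.sqrt (nu i) by rewrite sqrtr_gt0.
have ha i : 0 < a i by rewrite invr_gt0.
have ha2 i : a i ^+ 2 = (nu i)^-1 by rewrite exprVn sqr_sqrtr // ltW.
pose S := \sum_i a i.
have i0 : 'I_(2^k) by exists 0%N; rewrite expn_gt0.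
have hS : 0 < S.
  rewrite /S (bigD1 i0) //=; apply: (lt_le_trans (ha i0)).
  by rewrite lerDl sumr_ge0 // => j _; exact: ltW.
have hS2 : 0 < S ^+ 2 by rewrite exprn_gt0.
have bound v : in_simplex v -> h_A (design_X k) nu v <= c / S ^+ 2.
  move=> [hv0 hv1]; rewrite (hA_formula hc h1 h2 hnu hv0).
  case: ifP => [/forallP hvp | _]; last by rewrite divr_ge0 ?ltW.
  have e := key_id ha2 hnu hvp hv1.
  have hQ : S ^+ 2 <= \sum_i (v i * nu i)^-1.
    rewrite -subr_ge0 e sumr_ge0 // => i _.
    by rewrite divr_ge0 ?sqr_ge0 ?ltW.
  by rewrite divc_le // (lt_le_trans hS2 hQ).
have charac w : in_simplex w ->
    (A_optimal (design_X k) nu w <-> forall i, w i = S^-1 * a i).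
  move=> hw; split.
  - case=> _ hopt.
    have wsS : in_simplex (fun i => S^-1 * a i).
      split; first by move=> i; rewrite mulr_ge0 ?invr_ge0 ?ltW.
      by rewrite -mulr_sumr mulVf ?gt_eqF.
    have wsp : forall i, 0 < S^-1 * a i by move=> i; rewrite mulr_gt0 ?invr_gt0.
    have hstar : h_A (design_X k) nu (fun i => S^-1 * a i) = c / S ^+ 2.
      rewrite (hA_formula hc h1 h2 hnu (proj1 wsS)) ifT; last by apply/forallP.
      congr (c / _); apply/eqP; rewrite -subr_eq0 (key_id ha2 hnu wsp (proj2 wsS)).
      apply/eqP; apply: big1 => i _.
      by rewrite mulrA mulfV ?gt_eqF // mul1r subrr expr0n /= mul0r.
    have := hopt _ wsS; rewrite hstar.
    case: hw => hw0 hw1; rewrite (hA_formula hc h1 h2 hnu hw0).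
    case: ifP => [/forallP hwp | _]; last first.
      by move=> /(lt_le_trans (divr_gt0 hc hS2)); rewrite ltxx.
    have e := key_id ha2 hnu hwp hw1.
    have nonneg : forall j, true -> 0 <= (a j - S * w j) ^+ 2 / w j.
      by move=> j _; rewrite divr_ge0 ?sqr_ge0 ?ltW.
    have hQ : 0 < \sum_i (w i * nu i)^-1.
      by apply: (lt_le_trans hS2); rewrite -subr_ge0 e sumr_ge0.
    rewrite divc_le // => hle.
    have e0 : \sum_i (a i - S * w i) ^+ 2 / w i = 0.
      apply/eqP; rewrite eq_le -e subr_le0 hle /= e sumr_ge0 //.
    move=> i; have z := @psumr_eq0P _ _ _ _ nonneg e0 i isT.
    move/eqP: z; rewrite mulf_eq0 invr_eq0 (gt_eqF (hwp i)) orbF sqrf_eq0 subr_eq0.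
    by move=> /eqP ->; rewrite mulKf ?gt_eqF.
  - move=> hwi; split => // v hv; apply: le_trans (bound v hv) _.
    have hwp : forall i, 0 < w i by move=> i; rewrite hwi mulr_gt0 ?invr_gt0.
    case: hw => hw0 hw1; rewrite (hA_formula hc h1 h2 hnu hw0) ifT; last by apply/forallP.
    have -> : \sum_i (w i * nu i)^-1 = S ^+ 2.
      apply/eqP; rewrite -subr_eq0 (key_id ha2 hnu hwp hw1).
      apply/eqP; apply: big1 => i _.
      by rewrite hwi mulrA mulfV ?gt_eqF // mul1r subrr expr0n /= mul0r.
    by [].
have P1 : forall w : 'I_(2 ^ k) -> R, in_simplex w ->
     (A_optimal (design_X k) nu w <->
      exists c : R, forall i, w i = c * (Num.sqrt (nu i))^-1).
  move=> w hw; rewrite (charac w hw); split => [h|[c' hc']]; first by exists S^-1.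
  have hcS : c' * S = 1.
    case: hw => _ <-; rewrite /S mulr_sumr; apply: eq_bigr => i _; by rewrite hc'.
  move=> i; rewrite hc'; congr (_ * _).
  by rewrite -[c']mulr1 -(mulfV (negbT (gt_eqF hS))) mulrA hcS mul1r.
split; first exact: P1.
have hu : in_simplex (fun _ : 'I_(2 ^ k) => ((2 ^ k)%:R : R)^-1).
  split; first by move=> i; rewrite invr_ge0 ler0n.
  rewrite sumr_const card_ord -(mulr_natr ((2 ^ k)%:R^-1)).
  by rewrite mulVf // gt_eqF.
split.
- move=> /(P1 _ hu) [c' hc'] i j.
  have c'0 : c' != 0.
    apply/eqP=> c0; have := hc' i0; rewrite c0 mul0r; move/eqP.
    by rewrite invr_eq0 pnatr_eq0 expn_eq0.
  have : a i = a j by apply: (mulfI c'0); rewrite -hc' -hc'.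
  move/invr_inj => e.
  by rewrite -(sqr_sqrtr (ltW (hnu i))) -(sqr_sqrtr (ltW (hnu j))) e.
- move=> hall; apply/(P1 _ hu); exists (c^-1 * Num.sqrt (nu i0)) => i.
  by rewrite (hall i i0) -mulrA mulfV ?mulr1 // gt_eqF.
Qed.
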